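(* A flag $Z=(g,V)$ is a sudoku flag and subsquares of $R(M_Z)$ are latin squares if and only if $Z$ can be written $$ Z=\left[ \begin{array}{ccc} 1 & 0 & 0 \\ 0 & 1 & 1 \\ a & b & 0 \\ c & d & \beta \end{array} \right], $$ where $b$ and $\beta$ are nonzero and $\Gamma =\begin{pmatrix} a & b\\c &d \end{pmatrix}$ is nonsingular.
   Context: Let $\mathbb F$ be the finite field of order $q$. Locations of a sudoku solution of order $q^2$ are identified with $\mathbb F^4$: location $x_1x_2x_3x_4$ lies in large row $x_1$, row $x_2$ within that large row, large column $x_3$, column $x_4$ within that large column. A two-dimensional subspace $g\subset\mathbb F^4$ generates a (parallel-type) linear sudoku solution, in which the set of locations of each symbol is a coset of $g$, precisely when $g$ meets each of $\langle 1000,0100\rangle$, $\langle 0010,0001\rangle$, $\langle 0100,0001\rangle$ trivially. A flag is a pair $Z=(g,V)$ of subspaces of $\mathbb F^4$ with $\dim g=2$, $\dim V=3$, $g\subset V$; it is a sudoku flag if $g$ generates a linear sudoku solution. A sudoku flag generates a linear sudoku solution $M_Z$ with symbols $\{0,\dots,q^2-1\}$ (written in base $q$ as radix digit and units digit) such that each coset of $g$ houses exactly one symbol and each coset of $V$ houses exactly one radix digit. $R(M_Z)$, the radix solution, is the square of radix digits of the symbols of $M_Z$. The notation $[v_1\ v_2\ v_3]$ denotes the flag $(\langle v_1,v_2\rangle,\langle v_1,v_2,v_3\rangle)$, with the $v_i$ written as columns. *)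

(* Defs.v *)
From mathcomp Require Import all_boot all_order all_algebra all_field.
Set Implicit Arguments. Unset Strict Implicit. Unset Printing Implicit Defensive.
Import GRing.Theory.
Local Open Scope ring_scope.

Section Sudoku.
Variable F : finFieldType.

(* Locations are row vectors x = (x1 x2 x3 x4) in F^4; subspaces of F^4 are
   represented as row spaces of matrices (mxalgebra). *)
Definition vec4 (x1 x2 x3 x4 : F) : 'rV[F]_4 := \row_(k < 4) [:: x1; x2; x3; x4]`_k.

Definition e1 : 'rV[F]_4 := vec4 1 0 0 0.
Definition e2 : 'rV[F]_4 := vec4 0 1 0 0.
Definition e3 : 'rV[F]_4 := vec4 0 0 1 0.
Definition e4 : 'rV[F]_4 := vec4 0 0 0 1.

Definition meets_trivially m n (g : 'M[F]_(m, 4)) (W : 'M[F]_(n, 4)) : Prop :=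
  forall v : 'rV[F]_4, (v <= g)%MS -> (v <= W)%MS -> v = 0.

Definition sudoku_gen m (g : 'M[F]_(m, 4)) : Prop :=
  [/\ \rank g = 2%N,
      meets_trivially g (col_mx e1 e2),
      meets_trivially g (col_mx e3 e4) &
      meets_trivially g (col_mx e2 e4)].

Definition is_flag m n (g : 'M[F]_(m, 4)) (V : 'M[F]_(n, 4)) : Prop :=
  [/\ \rank g = 2%N, \rank V = 3%N & (g <= V)%MS].

Definition sudoku_flag m n (g : 'M[F]_(m, 4)) (V : 'M[F]_(n, 4)) : Prop :=
  is_flag g V /\ sudoku_gen g.

(* M : locations -> symbols {0, ..., q^2-1} is a linear sudoku
   solution generated by the flag (g, V): locations carry the same symbol iff
   they lie in the same coset of g, and the same radix digit (symbol div q)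
   iff they lie in the same coset of V. *)
Definition generated_by m n (g : 'M[F]_(m, 4)) (V : 'M[F]_(n, 4))
    (M : 'rV[F]_4 -> 'I_(#|F| ^ 2)) : Prop :=
  forall x y : 'rV[F]_4,
    (M x == M y) = (x - y <= g)%MS /\
    (M x %/ #|F| == M y %/ #|F|)%N = (x - y <= V)%MS.

Definition radix_sol (M : 'rV[F]_4 -> 'I_(#|F| ^ 2)) (x : 'rV[F]_4) : nat :=
  (M x %/ #|F|)%N.

Definition latin_square (L : F -> F -> nat) : Prop :=
  [/\ forall i j, (L i j < #|F|)%N,
      forall i, injective (L i) &
      forall j, injective (fun i => L i j)].

(* the subsquare in large row s and large column t, with rows x2 and
   columns x4 *)
Definition subsquare (R : 'rV[F]_4 -> nat) (s t : F) : F -> F -> nat :=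
  fun i j => R (vec4 s i t j).

Definition subsquares_latin (R : 'rV[F]_4 -> nat) : Prop :=
  forall s t : F, latin_square (subsquare R s t).

End Sudoku.

(* Main.v *)
Require Import Defs.
From mathcomp Require Import all_boot all_order all_algebra all_field.
From mathcomp Require Import ring zify.
Import GRing.Theory.
Local Open Scope ring_scope.

Section Helpers.
Set Implicit Arguments. Unset Strict Implicit.
Variable F : finFieldType.
Implicit Types (a b c d : F).

Lemma vec4D a b c d a' b' c' d' :
  vec4 a b c d + vec4 a' b' c' d' = vec4 (a + a') (b + b') (c + c') (d + d').
Proof. by apply/rowP => k; rewrite !mxE; case: k => [[|[|[|[|k]]]] Hk]. Qed.

Lemma vec4Z t a b c d : t *: vec4 a b c d = vec4 (t * a) (t * b) (t * c) (t * d).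
Proof. by apply/rowP => k; rewrite !mxE; case: k => [[|[|[|[|k]]]] Hk]. Qed.

Lemma vec4N a b c d : - vec4 a b c d = vec4 (- a) (- b) (- c) (- d).
Proof. by apply/rowP => k; rewrite !mxE; case: k => [[|[|[|[|k]]]] Hk]. Qed.

Lemma vec4B a b c d a' b' c' d' :
  vec4 a b c d - vec4 a' b' c' d' = vec4 (a - a') (b - b') (c - c') (d - d').
Proof. by rewrite vec4N vec4D. Qed.

Lemma vec4_0 : 0 = vec4 0 0 0 0 :> 'rV[F]_4.
Proof. by apply/rowP => k; rewrite !mxE; case: k => [[|[|[|[|k]]]] Hk]. Qed.

Lemma vec4_inj a b c d a' b' c' d' :
  vec4 a b c d = vec4 a' b' c' d' -> [/\ a = a', b = b', c = c' & d = d'].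
Proof.
move=> H.
have := congr1 (fun v : 'rV[F]_4 => v ord0 (@Ordinal 4 0 isT)) H.
have := congr1 (fun v : 'rV[F]_4 => v ord0 (@Ordinal 4 1 isT)) H.
have := congr1 (fun v : 'rV[F]_4 => v ord0 (@Ordinal 4 2 isT)) H.
have := congr1 (fun v : 'rV[F]_4 => v ord0 (@Ordinal 4 3 isT)) H.
by rewrite !mxE /= => -> -> -> ->.
Qed.

Lemma vec4_eq0 a b c d : vec4 a b c d = 0 -> [/\ a = 0, b = 0, c = 0 & d = 0].
Proof. by rewrite vec4_0 => /vec4_inj. Qed.

Lemma mem1 (u v : 'rV[F]_4) : (u <= v)%MS <-> exists t, u = t *: v.
Proof. by split => [/sub_rVP|/sub_rVP]. Qed.

Lemma dec_add m (A : 'M[F]_(m, 4)) (v u : 'rV[F]_4) :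
  (u <= A + v)%MS -> exists t, (u - t *: v <= A)%MS.
Proof.
case/sub_addsmxP => [[p1 p2]] /= ->.
exists (p2 0 0).
by rewrite {1}(mx11_scalar p2) mul_scalar_mx addrK submxMl.
Qed.

Lemma mem2 (u r1 r2 : 'rV[F]_4) :
  (u <= col_mx r1 r2)%MS <-> exists x y, u = x *: r1 + y *: r2.
Proof.
rewrite -addsmxE; split.
  move=> /dec_add [y] /sub_rVP [x] Hx; exists x, y.
  by rewrite -Hx subrK.
case=> x [y] ->.
by rewrite addmx_sub_adds // scalemx_sub.
Qed.

Lemma mem3 (u r1 r2 r3 : 'rV[F]_4) :
  (u <= col_mx (col_mx r1 r2) r3)%MS <-> exists x y z, u = x *: r1 + y *: r2 + z *: r3.
Proof.
rewrite -addsmxE; split.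
  move=> /dec_add [z] /mem2 [x [y] Hx]; exists x, y, z.
  by rewrite -Hx subrK.
case=> x [y [z ->]].
rewrite addmx_sub_adds // ?scalemx_sub //.
by apply/mem2; exists x, y.
Qed.

Lemma sub_scale_inv m (A : 'M[F]_(m, 4)) (v : 'rV[F]_4) t :
  t != 0 -> (t *: v <= A)%MS -> (v <= A)%MS.
Proof.
move=> t0 /(scalemx_sub t^-1); by rewrite scalerA mulVf // scale1r.
Qed.

Lemma rank_add_notin m (n : nat) (A : 'M[F]_(m, 4)) (v : 'rV[F]_4) :
  \rank A = n -> ~~ (v <= A)%MS -> \rank (A + v)%MS = n.+1.
Proof.
move=> rA nv.
have [le eq] := mxrank_leqif_sup (addsmxSl A v).
have vin : (v <= A + v)%MS by exact: addsmxSr.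
have nsub : (A + v <= A)%MS = false.
  by apply/negbTE; apply: contra nv => H; exact: submx_trans vin H.
rewrite nsub in eq.
have lt : (n < \rank (A + v))%N by rewrite -rA ltn_neqAle eq le.
have [le2 _] := mxrank_adds_leqif A v.
rewrite rank_rV rA in le2.
apply/eqP; rewrite eqn_leq lt andbT.
apply: leq_trans le2 _. by rewrite -[n.+1]addn1 leq_add2l leq_b1.
Qed.


Lemma detGam a b c d :
  \det (col_mx (\row_(j < 2) [:: a; b]`_j) (\row_(j < 2) [:: c; d]`_j)) = a * d - b * c.
Proof.
have -> : col_mx (\row_(j < 2) [:: a; b]`_j) (\row_(j < 2) [:: c; d]`_j) = \matrix_(i < 2, j < 2) (if val i == 0%N then [::a;b]`_j else [::c;d]`_j).
  apply/matrixP => i j; rewrite !mxE; case: splitP => k /= Hk; rewrite !mxE Hk //.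
  by rewrite ord1.
rewrite (expand_det_row _ ord0) !big_ord_recl big_ord0 /cofactor !det_mx11 !mxE /=.
rewrite expr0 expr1; ring.
Qed.

Lemma rankG a b c d : \rank (col_mx (vec4 1 0 a c) (vec4 0 1 b d)) = 2%N.
Proof.
rewrite -addsmxE; apply: rank_add_notin.
  rewrite rank_rV; case: eqP => // /vec4_eq0 [H _ _ _].
  by move/eqP: H; rewrite oner_eq0.
apply/negP => /mem1 [t]; rewrite vec4Z => /vec4_inj [_ H _ _].
by move/eqP: H; rewrite mulr0 oner_eq0.
Qed.

Lemma rankV a b c d beta : b != 0 ->
  \rank (col_mx (col_mx (vec4 1 0 a c) (vec4 0 1 b d)) (vec4 0 1 0 beta)) = 3%N.
Proof.
move=> b0; rewrite -addsmxE; apply: rank_add_notin; first exact: rankG.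
apply/negP => /mem2 [x [y]]; rewrite !vec4Z vec4D => /vec4_inj [H1 H2 H3 _].
have x0 : x = 0 by rewrite H1; ring.
have y1 : y = 1 by rewrite H2 x0; ring.
by move/eqP: b0; apply; rewrite H3 x0 y1; ring.
Qed.

Lemma latin_of (V : 'M[F]_4) (M : 'rV[F]_4 -> 'I_(#|F| ^ 2)) (g : 'M[F]_4) :
  generated_by g V M -> ~~ (e2 F <= V)%MS -> ~~ (e4 F <= V)%MS ->
  subsquares_latin (radix_sol M).
Proof.
move=> HM n2 n4 s t.
have q0 : (0 < #|F|)%N by apply/card_gt0P; exists 0.
have key : forall u v : 'rV[F]_4, radix_sol M u = radix_sol M v -> (u - v <= V)%MS.
  move=> u v H; have [_ E] := HM u v; by rewrite -E; apply/eqP; exact: H.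
split.
- move=> i j; rewrite /subsquare /radix_sol ltn_divLR //.
- move=> i j j' /key; rewrite vec4B !subrr.
  have [->//|ne] := eqVneq j j'.
  have -> : vec4 0 0 0 (j - j') = (j - j') *: e4 F by rewrite /e4 vec4Z !mulr0 mulr1.
  by move/(sub_scale_inv _); rewrite subr_eq0 => /(_ ne) H; rewrite H in n4.
- move=> j i i' /key; rewrite vec4B !subrr.
  have [->//|ne] := eqVneq i i'.
  have -> : vec4 0 (i - i') 0 0 = (i - i') *: e2 F by rewrite /e2 vec4Z !mulr0 mulr1.
  by move/(sub_scale_inv _); rewrite subr_eq0 => /(_ ne) H; rewrite H in n2.
Qed.


Lemma subm_sub m1 m2 (A B : 'M[F]_(m1, 4)) (C : 'M[F]_(m2, 4)) :
  (A <= C)%MS -> (B <= C)%MS -> (A - B <= C)%MS.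
Proof. by move=> HA HB; rewrite addmx_sub // -scaleN1r scalemx_sub. Qed.

Lemma radix_arith (q a b a' b' : nat) : (b < q)%N -> (b' < q)%N ->
  ((a * q + b)%N == (a' * q + b')%N) = (a == a') && (b == b').
Proof.
move=> bq b'q; apply/eqP/andP => [E|[/eqP -> /eqP ->]] //.
have q0 : (0 < q)%N by apply: leq_ltn_trans bq.
have E1 := congr1 (divn^~ q) E; have E2 := congr1 (modn^~ q) E.
rewrite /= !divnMDl // !divn_small // !addn0 in E1.
rewrite /= !modnMDl !modn_small // in E2.
by rewrite E1 E2.
Qed.

Lemma exists_M (g V : 'M[F]_4) : \rank g = 2%N -> \rank V = 3%N -> (g <= V)%MS ->
  exists M, generated_by g V M.
Proof.
move=> rg rV gV.
have /row_subPn [i0 nz] : ~~ (1%:M <= V)%MS.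
  apply/negP => /mxrankS; by rewrite mxrank1 rV.
set z := row i0 1%:M in nz.
have /row_subPn [i1 nw] : ~~ (V <= g)%MS.
  apply/negP => /mxrankS; by rewrite rV rg.
set w := row i1 V in nw.
have wV : (w <= V)%MS by exact: row_sub.
have rgw : \rank (g + w)%MS = 3%N by apply: rank_add_notin.
have gwV : (g + w <= V)%MS by rewrite addsmx_sub gV wV.
have nz' : ~~ (z <= g + w)%MS by apply: contra nz => H; exact: submx_trans H gwV.
have rgwz : \rank (g + w + z)%MS = 4%N by apply: rank_add_notin.
pose P (x : 'rV[F]_4) (p : F * F) := ((x - p.2 *: z - p.1 *: w)%R <= g)%MS.
have Pex : forall x, exists p, P x p.
  move=> x.
  have : (x <= g + w + z)%MS by apply: submx_full; rewrite /row_full rgwz.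
  case/dec_add => t /dec_add [s Hs]; by exists (s, t).
have uniq : forall s t, ((s *: w + t *: z)%R <= g)%MS -> s = 0 /\ t = 0.
  move=> s t H.
  have tz : (t *: z <= V)%MS.
    have -> : t *: z = (s *: w + t *: z) - s *: w by rewrite addrC addKr.
    apply: subm_sub; first exact: submx_trans H gV.
    exact: scalemx_sub.
  have t0 : t = 0.
    by apply/eqP; apply: contraR nz => tn0; exact: sub_scale_inv tn0 tz.
  rewrite t0 scale0r addr0 in H; split => //.
  by apply/eqP; apply: contraR nw => sn0; exact: sub_scale_inv sn0 H.
have decomp : forall x y p q, x - y =
    ((x - p.2 *: z - p.1 *: w) - (y - q.2 *: z - q.1 *: w)) +
    ((p.1 - q.1) *: w + (p.2 - q.2) *: z).
  move=> x y p q; apply/rowP => k; rewrite !mxE; ring.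
have charG : forall x y p q, P x p -> P y q -> (x - y <= g)%MS = (p == q).
  move=> x y [p1 p2] [q1 q2] Px Py; rewrite xpair_eqE.
  have Hh : (((x - p2 *: z - p1 *: w) - (y - q2 *: z - q1 *: w))%R <= g)%MS
    by exact: subm_sub Px Py.
  apply/idP/andP => [H|[/eqP e1 /eqP e2]]; last subst q1 q2.
    have Hk : (((p1 - q1) *: w + (p2 - q2) *: z)%R <= g)%MS.
      have -> : (p1 - q1) *: w + (p2 - q2) *: z =
          (x - y) - ((x - p2 *: z - p1 *: w) - (y - q2 *: z - q1 *: w)).
        by apply/rowP => k; rewrite !mxE; ring.
      exact: subm_sub H Hh.
    have [/eqP e1 /eqP e2] := uniq _ _ Hk.
    by rewrite !subr_eq0 in e1 e2; rewrite e1 e2.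
  have -> : x - y = ((x - p2 *: z - p1 *: w) - (y - p2 *: z - p1 *: w))
    by apply/rowP => k; rewrite !mxE; ring.
  exact: Hh.
have charV : forall x y p q, P x p -> P y q -> (x - y <= V)%MS = (p.2 == q.2).
  move=> x y [p1 p2] [q1 q2] Px Py /=.
  have Hh : (((x - p2 *: z - p1 *: w) - (y - q2 *: z - q1 *: w))%R <= V)%MS.
    by apply: submx_trans gV; exact: subm_sub Px Py.
  apply/idP/eqP => [H|e2]; last subst q2.
    have Hk : (((p2 - q2) *: z)%R <= V)%MS.
      have -> : (p2 - q2) *: z =
          (x - y) - ((x - p2 *: z - p1 *: w) - (y - q2 *: z - q1 *: w)) - (p1 - q1) *: w.
        by apply/rowP => k; rewrite !mxE; ring.
      by apply: subm_sub; [exact: subm_sub H Hh | exact: scalemx_sub].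
    apply/eqP; rewrite -subr_eq0; apply: contraR nz => ne.
    exact: sub_scale_inv ne Hk.
  have -> : x - y = ((x - p2 *: z - p1 *: w) - (y - p2 *: z - q1 *: w)) + (p1 - q1) *: w
    by apply/rowP => k; rewrite !mxE; ring.
  apply: addmx_sub; last exact: scalemx_sub.
  by apply: submx_trans gV; exact: subm_sub Px Py.
pose pf x := odflt (0, 0) [pick p | P x p].
have Ppf : forall x, P x (pf x).
  move=> x; rewrite /pf; case: pickP => [p Hp | Hn] //=.
  by have [p Hp] := Pex x; move: (Hn p); rewrite Hp.
pose idx (t : F) : nat := enum_rank t.
have idxq : forall t, (idx t < #|F|)%N by move=> t; exact: ltn_ord.
have idxE : forall t t', (idx t == idx t') = (t == t').
  by move=> t t'; rewrite /idx val_eqE (inj_eq enum_rank_inj).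
pose Mv x := (idx (pf x).2 * #|F| + idx (pf x).1)%N.
have Mvb : forall x, (Mv x < #|F| ^ 2)%N.
  move=> x; rewrite /Mv; have h1 := idxq (pf x).2; have h2 := idxq (pf x).1.
  nia.
exists (fun x => Ordinal (Mvb x)) => x y /=; split.
  rewrite -val_eqE /= /Mv radix_arith // !idxE (charG x y _ _ (Ppf x) (Ppf y)).
  by case: (pf x) (pf y) => [? ?] [? ?]; rewrite xpair_eqE andbC.
have q0 : (0 < #|F|)%N by apply/card_gt0P; exists 0.
rewrite /Mv !divnMDl // !divn_small // !addn0 idxE.
by rewrite (charV x y _ _ (Ppf x) (Ppf y)).
Qed.


Lemma mulf0_ne (y b : F) : b != 0 -> y * b = 0 -> y = 0.
Proof. by move=> b0 /eqP; rewrite mulf_eq0 (negbTE b0) orbF => /eqP. Qed.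

Lemma sub_colmxl m1 m2 (A : 'M[F]_(m1, 4)) (B : 'M[F]_(m2, 4)) : (A <= col_mx A B)%MS.
Proof. by rewrite -addsmxE addsmxSl. Qed.

Lemma eqmx_symb m1 m2 (A : 'M[F]_(m1, 4)) (B : 'M[F]_(m2, 4)) :
  (A == B)%MS -> (B == A)%MS.
Proof. by move/eqmxP => H; apply/eqmxP; exact: eqmx_sym. Qed.

End Helpers.

Theorem proposition4p5 (F : finFieldType) (g V : 'M[F]_4) :
  (sudoku_flag g V /\
   forall M : 'rV[F]_4 -> 'I_(#|F| ^ 2),
     generated_by g V M -> subsquares_latin (radix_sol M))
  <->
  (exists a b c d beta : F,
     [/\ b != 0, beta != 0,
         col_mx (\row_(j < 2) [:: a; b]`_j) (\row_(j < 2) [:: c; d]`_j)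
           \in unitmx,
         (g == col_mx (vec4 1 0 a c) (vec4 0 1 b d))%MS &
         (V == col_mx (col_mx (vec4 1 0 a c) (vec4 0 1 b d)) (vec4 0 1 0 beta))%MS]).
Proof.
split.
  case=> [[[rg rV gV] [_ m12 m34 m24]] Hlat].
  have [M HM] := exists_M rg rV gV.
  have Hl := Hlat M HM.
  have radeq : forall x y, (x - y <= V)%MS -> radix_sol M x = radix_sol M y.
    by move=> x y H; have [_ E] := HM x y; apply/eqP; rewrite /radix_sol E.
  have n2 : ~~ (e2 F <= V)%MS.
    apply/negP => H2; have [_ _ inj] := Hl 0 0.
    have E : radix_sol M (vec4 0 0 0 0) = radix_sol M (vec4 0 1 0 0).
      apply: radeq; rewrite vec4B !subrr sub0r.
      have -> : vec4 0 (-1) 0 0 = (-1) *: e2 F by rewrite /e2 vec4Z !mulr0 mulr1.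
      exact: scalemx_sub.
    by have /eqP := inj 0 0 1 E; rewrite eq_sym oner_eq0.
  have n4 : ~~ (e4 F <= V)%MS.
    apply/negP => H4; have [_ inj _] := Hl 0 0.
    have E : radix_sol M (vec4 0 0 0 0) = radix_sol M (vec4 0 0 0 1).
      apply: radeq; rewrite vec4B !subrr sub0r.
      have -> : vec4 0 0 0 (-1) = (-1) *: e4 F by rewrite /e4 vec4Z !mulr0 mulr1.
      exact: scalemx_sub.
    by have /eqP := inj 0 0 1 E; rewrite eq_sym oner_eq0.
  have n3g : ~~ (e3 F <= g)%MS.
    apply/negP => H3.
    have := m34 _ H3 (sub_colmxl _ _); rewrite /e3 => /vec4_eq0 [_ _ /eqP].
    by rewrite oner_eq0.
  have rg3 : \rank (g + e3 F)%MS = 3%N by apply: rank_add_notin.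
  have n4g : ~~ (e4 F <= g + e3 F)%MS.
    apply/negP => /dec_add [t Ht].
    have H' : (e4 F - t *: e3 F <= col_mx (e3 F) (e4 F))%MS.
      by apply/mem2; exists (- t), 1; rewrite scale1r scaleNr addrC.
    have := m34 _ Ht H'; rewrite /e3 /e4 vec4Z vec4B => /vec4_eq0 [_ _ _ /eqP].
    by rewrite mulr0 subr0 oner_eq0.
  have rg4 : \rank (g + e3 F + e4 F)%MS = 4%N by apply: rank_add_notin.
  have full : forall u : 'rV[F]_4, exists s t, (u - t *: e4 F - s *: e3 F <= g)%MS.
    move=> u; have : (u <= g + e3 F + e4 F)%MS by apply: submx_full; rewrite /row_full rg4.
    by case/dec_add => t /dec_add [s Hs]; exists s, t.
  have [s1 [t1 H1]] := full (e1 F).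
  have [s2 [t2 H2]] := full (e2 F).
  set a := - s1; set c := - t1; set b := - s2; set d := - t2.
  have r1g : (vec4 1 0 a c <= g)%MS.
    by move: H1; rewrite /e1 /e3 /e4 !vec4Z !vec4B !mulr0 !mulr1 !subr0 !sub0r.
  have r2g : (vec4 0 1 b d <= g)%MS.
    by move: H2; rewrite /e2 /e3 /e4 !vec4Z !vec4B !mulr0 !mulr1 !subr0 !sub0r.
  have b0 : b != 0.
    apply/eqP => bz; move: r2g; rewrite bz => H.
    have H' : (vec4 0 1 0 d <= col_mx (e2 F) (e4 F))%MS.
      apply/mem2; exists 1, d; rewrite /e2 /e4 !vec4Z vec4D.
      congr vec4; ring.
    by have := m24 _ H H' => /vec4_eq0 [_ /eqP]; rewrite oner_eq0.
  have det0 : a * d - b * c != 0.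
    apply/eqP => dz.
    have H : ((b *: vec4 1 0 a c - a *: vec4 0 1 b d)%R <= g)%MS.
      by apply: subm_sub; apply: scalemx_sub.
    have H' : ((b *: vec4 1 0 a c - a *: vec4 0 1 b d)%R <= col_mx (e1 F) (e2 F))%MS.
      apply/mem2; exists b, (- a); rewrite /e1 /e2 !vec4Z vec4D vec4B.
      congr vec4; try ring.
      by transitivity (- (a * d - b * c)); [ring | rewrite dz; ring].
    have := m12 _ H H'; rewrite !vec4Z vec4B => /vec4_eq0 [Hb _ _ _].
    by move/eqP: b0; apply; rewrite -Hb; ring.
  have rGV : \rank (V + e2 F)%MS = 4%N by apply: rank_add_notin.
  have [t Ht] : exists t, (e4 F - t *: e2 F <= V)%MS.
    by apply: dec_add; apply: submx_full; rewrite /row_full rGV.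
  have t0 : - t != 0.
    rewrite oppr_eq0; apply/eqP => tz; move: Ht; rewrite tz scale0r subr0 => H.
    by rewrite H in n4.
  have r3V : (vec4 0 1 0 (- t)^-1 <= V)%MS.
    have -> : vec4 0 1 0 (- t)^-1 = (- t)^-1 *: (e4 F - t *: e2 F).
      rewrite /e2 /e4 !vec4Z vec4B vec4Z; congr vec4; [ring | | ring | ring].
      by rewrite mulr1 sub0r (mulVf t0).
    exact: scalemx_sub.
  have GsubV : (col_mx (vec4 1 0 a c) (vec4 0 1 b d) <= g)%MS by rewrite col_mx_sub r1g r2g.
  exists a, b, c, d, (- t)^-1; split => //.
  - by rewrite invr_eq0.
  - by rewrite unitmxE detGam unitfE.
  - by apply: eqmx_symb; rewrite -(mxrank_leqif_eq GsubV) rankG rg.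
  - apply: eqmx_symb.
    have sub : (col_mx (col_mx (vec4 1 0 a c) (vec4 0 1 b d)) (vec4 0 1 0 (- t)^-1) <= V)%MS.
      by rewrite col_mx_sub r3V andbT; exact: submx_trans GsubV gV.
    by rewrite -(mxrank_leqif_eq sub) rankV // rV.
case=> a [b [c [d [beta [b0 bet0 U Hg HV]]]]].
move/eqmxP: Hg => Hg; move/eqmxP: HV => HV.
have det0 : a * d - b * c != 0 by move: U; rewrite unitmxE detGam unitfE.
have n2 : ~~ (e2 F <= V)%MS.
  rewrite HV; apply/negP => /mem3 [x [y [z]]].
  rewrite /e2 !vec4Z !vec4D => /vec4_inj [E1 E2 E3 E4].
  have x0 : x = 0 by transitivity (x * 1 + y * 0 + z * 0); [ring | rewrite -E1].
  have y0 : y = 0.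
    by apply: (mulf0_ne b0); transitivity (x * a + y * b + z * 0); [rewrite x0; ring | rewrite -E3].
  have z0 : z = 0.
    by apply: (mulf0_ne bet0); transitivity (x * c + y * d + z * beta); [rewrite x0 y0; ring | rewrite -E4].
  by move: E2; rewrite x0 y0 z0 !mul0r !addr0 => /eqP; rewrite oner_eq0.
have n4 : ~~ (e4 F <= V)%MS.
  rewrite HV; apply/negP => /mem3 [x [y [z]]].
  rewrite /e4 !vec4Z !vec4D => /vec4_inj [E1 E2 E3 E4].
  have x0 : x = 0 by transitivity (x * 1 + y * 0 + z * 0); [ring | rewrite -E1].
  have y0 : y = 0.
    by apply: (mulf0_ne b0); transitivity (x * a + y * b + z * 0); [rewrite x0; ring | rewrite -E3].
  have z0 : z = 0 by transitivity (x * 0 + y * 1 + z * 1); [rewrite x0 y0; ring | rewrite -E2].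
  by move: E4; rewrite x0 y0 z0 !mul0r !addr0 => /eqP; rewrite oner_eq0.
split; last by move=> M HM; exact: latin_of HM n2 n4.
split.
  split; first by rewrite Hg rankG.
    by rewrite HV rankV.
  by rewrite Hg HV sub_colmxl.
split; first by rewrite Hg rankG.
- move=> v; rewrite Hg => /mem2 [x [y ->]] /mem2 [x' [y']].
  rewrite /e1 /e2 !vec4Z !vec4D => /vec4_inj [E1 E2 E3 E4].
  have hx : x * (a * d - b * c) = 0.
    by transitivity (d * (x * a + y * b) - b * (x * c + y * d)); [ring | rewrite E3 E4; ring].
  have hy : y * (a * d - b * c) = 0.
    by transitivity (a * (x * c + y * d) - c * (x * a + y * b)); [ring | rewrite E3 E4; ring].
  by rewrite (mulf0_ne det0 hx) (mulf0_ne det0 hy) !mul0r !addr0 -vec4_0.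
- move=> v; rewrite Hg => /mem2 [x [y ->]] /mem2 [x' [y']].
  rewrite /e3 /e4 !vec4Z !vec4D => /vec4_inj [E1 E2 E3 E4].
  have x0 : x = 0 by transitivity (x * 1 + y * 0); [ring | rewrite E1; ring].
  have y0 : y = 0 by transitivity (x * 0 + y * 1); [ring | rewrite E2; ring].
  by rewrite x0 y0 !mul0r !addr0 -vec4_0.
- move=> v; rewrite Hg => /mem2 [x [y ->]] /mem2 [x' [y']].
  rewrite /e2 /e4 !vec4Z !vec4D => /vec4_inj [E1 E2 E3 E4].
  have x0 : x = 0 by transitivity (x * 1 + y * 0); [ring | rewrite E1; ring].
  have y0 : y = 0.
    by apply: (mulf0_ne b0); transitivity (x * a + y * b); [rewrite x0; ring | rewrite E3; ring].
  by rewrite x0 y0 !mul0r !addr0 -vec4_0.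
Qed.
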